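(* As formal power series in $x,y$, $$F(x,y) = \frac{x}{y}\left(\frac{G(y)}{1-F(x,y)} - \frac{G(0)}{1-F(x,0)}\right),$$ where the bracket on the right-hand side vanishes at $y=0$ so the division by $y$ is legitimate. Moreover this equation determines $F$ uniquely.
   Context: Let $\mu$ be a probability law on $\{0,1,2,\dots\}$, $\mu_k=\mu(\{k\})$, $G(t)=\sum_k\mu_kt^k$. Parking rule on a finite rooted tree with car arrival numbers $(a_x)$ at its vertices: each vertex holds at most one car; each car goes to its arrival vertex, parks there if free, otherwise drives towards the root and parks at the first free vertex on its way, and exits through the root if none is found (the final configuration does not depend on the order of the cars). A fully parked tree is a finite rooted plane tree $\mathbf t$ together with nonnegative integers $(a_x)_{x\in\mathbf t}$ (car arrivals) such that in the final configuration every vertex is occupied; its number of outgoing cars is the number of cars exiting through the root. Let $\mathbb T_n^{(k)}$ be the set of fully parked trees with $n$ vertices and $k$ outgoing cars, $w(\mathbf t)=\prod_{x\in\mathbf t}\mu_{a_x}$, and $F(x,y)=\sum_{n\ge1}\sum_{k\ge0}\sum_{\mathbf t\in\mathbb T_n^{(k)}} w(\mathbf t)x^ny^k.$ *)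

(* Defs.v *)
From HB Require Import structures.
From mathcomp Require Import all_boot all_order all_algebra.
From mathcomp Require Import all_classical all_reals all_analysis.
Set Implicit Arguments. Unset Strict Implicit. Unset Printing Implicit Defensive.
Import Order.TTheory GRing.Theory Num.Theory.
Local Open Scope ring_scope.
Local Open Scope classical_set_scope.

(* Labelled finite rooted plane trees: [GenTree.Node a ts] is a vertex with
   car-arrival number [a] and ordered list of subtrees [ts]. With leaf labels
   in [void] there are no leaves of the GenTree kind, so every element is a
   Node. *)
Definition lptree := GenTree.tree void.

Fixpoint nverts (t : lptree) : nat :=
  match t with
  | GenTree.Leaf v => match v with end
  | GenTree.Node _ ts => (sumn (map nverts ts)).+1
  end.

(* number of cars leaving the subtree rooted at t through its root:
   cars arriving at the root plus cars flowing in from the children, minus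
   the one that parks at the root (if any) *)
Fixpoint outflow (t : lptree) : nat :=
  match t with
  | GenTree.Leaf v => match v with end
  | GenTree.Node a ts => (a + sumn (map outflow ts)).-1
  end.

(* every vertex is occupied in the final configuration: a vertex is occupied
   iff at least one car arrives at it or flows into it from below *)
Fixpoint fully_parked (t : lptree) : bool :=
  match t with
  | GenTree.Leaf v => match v with end
  | GenTree.Node a ts => (0 < a + sumn (map outflow ts))%N && all fully_parked ts
  end.

Fixpoint weight (R : pzRingType) (mu : nat -> R) (t : lptree) : R :=
  match t with
  | GenTree.Leaf v => match v with end
  | GenTree.Node a ts => mu a * foldr *%R 1 (map (weight mu) ts)
  end.

Definition FPT (n k : nat) : set lptree :=
  [set t | nverts t = n /\ fully_parked t /\ outflow t = k].

(* formal power series in x, y : P n k = coefficient of x^n y^k *)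
Definition ps (R : Type) := nat -> nat -> R.

Section PS.
Variable R : pzRingType.
Definition ps_add (P Q : ps R) : ps R := fun n k => P n k + Q n k.
Definition ps_sub (P Q : ps R) : ps R := fun n k => P n k - Q n k.
Definition ps_scale (c : R) (P : ps R) : ps R := fun n k => c * P n k.
Definition ps_mul (P Q : ps R) : ps R := fun n k =>
  \sum_(i < n.+1) \sum_(j < k.+1) P i j * Q (n - i)%N (k - j)%N.
Definition ps_one : ps R := fun n k => ((n == 0%N) && (k == 0%N))%:R.
Definition ps_X : ps R := fun n k => ((n == 1%N) && (k == 0%N))%:R.
Definition ps_at_y0 (P : ps R) : ps R := fun n k => if k == 0%N then P n 0%N else 0.
(* P/y, legitimate when all coefficients of y^0 vanish *)
Definition ps_divY (P : ps R) : ps R := fun n k => P n k.+1.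
Definition ps_of_y (g : nat -> R) : ps R := fun n k => if n == 0%N then g k else 0.


End PS.
Arguments ps_one {R}.
Arguments ps_X {R}.

Definition Fgen (R : realType) (mu : nat -> R) : ps R :=
  fun n k => \sum_(t \in FPT n k) weight mu t.

(* P satisfies  P = x/y ( G(y)/(1-P(x,y)) - G(0)/(1-P(x,0)) ), the bracket
   vanishing at y = 0; the two inverses are inverses in R[[x,y]]. *)
Definition satisfies_eqn (R : realType) (mu : nat -> R) (P : ps R) : Prop :=
  exists Q Q0 : ps R,
    ps_mul (ps_sub ps_one P) Q = ps_one /\
    ps_mul (ps_sub ps_one (ps_at_y0 P)) Q0 = ps_one /\
    let B := ps_sub (ps_mul (ps_of_y mu) Q) (ps_scale (mu 0%N) Q0) in
    (forall n, B n 0%N = 0) /\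
    P = ps_mul ps_X (ps_divY B).

(* Main.v *)
Require Import Defs.
From HB Require Import structures.
From mathcomp Require Import all_boot all_order all_algebra.
From mathcomp Require Import all_classical all_reals all_analysis.
From mathcomp Require Import zify.
Import Order.TTheory GRing.Theory Num.Theory.
Import numFieldNormedType.Exports.
Local Open Scope ring_scope.
Local Open Scope classical_set_scope.
Set Implicit Arguments.

Lemma nil_in (P : lptree -> Prop) : forall t, t \in [::] -> P t.
Proof. by []. Qed.
Lemma cons_in (P : lptree -> Prop) x l : P x -> (forall t, t \in l -> P t) ->
  forall t, t \in x :: l -> P t.
Proof. by move=> Px Hl t; rewrite inE => /orP[/eqP->|/Hl]. Qed.

Definition lptree_ind' (P : lptree -> Prop)
  (H : forall a ts, (forall t, t \in ts -> P t) -> P (GenTree.Node a ts)) :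
  forall t, P t :=
  fix IH t := match t with
  | GenTree.Leaf v => match v with end
  | GenTree.Node a ts => H a ts ((fix G (l : seq lptree) : forall t, t \in l -> P t :=
      match l with
      | [::] => nil_in P
      | x :: l' => @cons_in P x l' (IH x) (G l')
      end) ts)
  end.

Fixpoint labs (t : lptree) : nat :=
  match t with
  | GenTree.Leaf v => match v with end
  | GenTree.Node a ts => a + sumn (map labs ts)
  end.

Definition fv (f : seq lptree) := sumn (map nverts f).
Definition fo (f : seq lptree) := sumn (map outflow f).
Definition fl (f : seq lptree) := sumn (map labs f).

Lemma nverts_gt0 t : (0 < nverts t)%N.
Proof. by case: t => [[]|]. Qed.

Lemma sumn_in (g h1 h2 : lptree -> nat) ts :
  (forall t, t \in ts -> g t = (h1 t + h2 t)%N) ->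
  sumn (map g ts) = (sumn (map h1 ts) + sumn (map h2 ts))%N.
Proof.
elim: ts => //= x l IH H. rewrite H ?mem_head // IH; first by lia.
by move=> t tl; apply: H; rewrite inE tl orbT.
Qed.

Lemma labs_fp t : fully_parked t -> labs t = (nverts t + outflow t)%N.
Proof.
elim/lptree_ind': t => a ts IH /= /andP[pos /allP fp].
rewrite (@sumn_in labs nverts outflow) //; first by lia.
by move=> t tin; apply: IH => //; apply: fp.
Qed.

Lemma fl_fp f : all fully_parked f -> fl f = (fv f + fo f)%N.
Proof. by move=> /allP H; apply: sumn_in => t /H; apply: labs_fp. Qed.

Fixpoint rawF (B n : nat) : seq (seq lptree) :=
  [:: [::]] ++ (if n is n'.+1 then
   [seq GenTree.Node p.1 p.2 :: r | p <- [seq (a, f) | a <- iota 0 B.+1, f <- rawF B n'], r <- rawF B n']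
   else [::]).

Lemma rawF_complete B n f : (fv f <= n)%N -> (fl f <= B)%N -> f \in rawF B n.
Proof.
elim: n f => [|n IH] [|[[]|a ts] r] //.
- rewrite /fv /fl => H1 H2. rewrite /rawF -/rawF in_cons; apply/orP; right.
  apply/allpairsP; exists ((a, ts), r); split => //.
  + apply/allpairsP; exists (a, ts); split => //. change (a \in iota 0 B.+1). rewrite mem_iota. move: H2 => /=; lia.
    apply: IH; rewrite /fv /fl; move: H1 H2 => /=; lia.
  + apply: IH; rewrite /fv /fl; move: H1 H2 => /=; lia.
Qed.

Definition fptb n k t := [&& nverts t == n, fully_parked t & outflow t == k].
Definition ffb n k f := [&& all fully_parked f, fv f == n & fo f == k].
Definition Fo n k := undup [seq f <- rawF (n+k) n | ffb n k f].
Definition Tr n k := undup [seq t <- flatten (rawF (n+k) n) | fptb n k t].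

Lemma Fo_uniq n k : uniq (Fo n k). Proof. exact: undup_uniq. Qed.
Lemma Tr_uniq n k : uniq (Tr n k). Proof. exact: undup_uniq. Qed.

Lemma mem_Fo n k f : (f \in Fo n k) = ffb n k f.
Proof.
rewrite mem_undup mem_filter. apply/andP/idP => [[]//|H]; split=>//.
move/and3P: H => [fp /eqP fvn /eqP fok].
apply: rawF_complete; first lia. rewrite fl_fp //; lia.
Qed.

Lemma mem_Tr n k t : (t \in Tr n k) = fptb n k t.
Proof.
rewrite mem_undup mem_filter. apply/andP/idP => [[]//|H]; split=>//.
move/and3P: H => [/eqP tn fp /eqP tk].
apply/flattenP; exists [:: t]; last by rewrite mem_head.
apply: rawF_complete; rewrite /fv /fl /=; first lia.
rewrite labs_fp //; lia.
Qed.

Section Sums.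
Variables (R : realType) (mu : nat -> R).

Definition fw (f : seq lptree) : R := foldr *%R 1 (map (weight mu) f).

Lemma Fgen_seq n k : Fgen mu n k = \sum_(t <- Tr n k) weight mu t.
Proof.
rewrite (fsbig_seq _ _ (Tr_uniq n k)) /Fgen.
have -> : FPT n k = [set` Tr n k].
  apply/seteqP; split => t /=; rewrite /FPT /= mem_Tr /fptb.
  - by move=> [-> [-> ->]]; rewrite !eqxx.
  - by move=> /and3P[/eqP -> -> /eqP ->].
by [].
Qed.

Lemma Fgen0 k : Fgen mu 0 k = 0.
Proof.
rewrite Fgen_seq big_seq; apply: big1 => t; rewrite mem_Tr /fptb.
by move: (nverts_gt0 t); case: (nverts t).
Qed.

Lemma Tr_decomp m k : \sum_(t <- Tr m.+1 k) weight mu t =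
  \sum_(a < k.+2) mu a * \sum_(f <- Fo m (k.+1 - a)%N) fw f.
Proof.
pose L := [seq GenTree.Node a f | a <- iota 0 k.+2, f <- Fo m (k.+1 - a)%N].
have pL : perm_eq (Tr m.+1 k) L.
  apply: uniq_perm; first exact: Tr_uniq.
    apply: allpairs_uniq_dep; first exact: iota_uniq.
      by move=> a _; exact: Fo_uniq.
    by move=> [a1 f1] [a2 f2] _ _ /= [-> ->].
  move=> t. rewrite mem_Tr. apply/idP/allpairsPdep.
  - case: t => [[]|a ts] /and3P [/eqP nv /andP[pos fp] /eqP out].
    exists a, ts; split => //.
      rewrite mem_iota; move: nv pos out => /=; lia.
    rewrite mem_Fo /ffb fp /fv /fo /=; apply/andP; split; apply/eqP;
      move: nv pos out => /=; lia.
  - case => a [f [ain fin ->]]. rewrite mem_iota in ain; rewrite mem_Fo in fin.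
    move/and3P: fin => [fp /eqP fvn /eqP fok].
    rewrite /fptb /= fp -/(fv f) -/(fo f) fvn fok andbT.
    apply/and3P; split; try apply/eqP; lia.
rewrite (perm_big _ pL) big_allpairs_dep.
have -> : iota 0 k.+2 = index_iota 0 k.+2 by rewrite /index_iota subn0.
rewrite big_mkord; apply: eq_bigr => a _; rewrite big_distrr.
by apply: eq_bigr.
Qed.

Lemma Fo_decomp n k : \sum_(f <- Fo n k) fw f =
  ((n == 0%N) && (k == 0%N))%:R +
  \sum_(i < n.+1) \sum_(j < k.+1) Fgen mu i j * \sum_(r <- Fo (n - i)%N (k - j)%N) fw r.
Proof.
pose s1 : seq (seq lptree) := if (n == 0%N) && (k == 0%N) then [:: [::]] else [::].
pose pairs := [seq (i, j) | i <- iota 0 n.+1, j <- iota 0 k.+1].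
pose inner := fun p : nat * nat => [seq (t, r) | t <- Tr p.1 p.2, r <- Fo (n - p.1)%N (k - p.2)%N].
pose s2 := [seq q.1 :: q.2 | p <- pairs, q <- inner p].
have pL : perm_eq (Fo n k) (s1 ++ s2).
  apply: uniq_perm; first exact: Fo_uniq.
    rewrite cat_uniq; apply/and3P; split.
    - by rewrite /s1; case: (_ && _).
    - apply/hasPn => x /allpairsPdep [p [q [_ _ ->]]].
      by rewrite /s1; case: (_ && _).
    - apply: allpairs_uniq_dep.
      + apply: allpairs_uniq; try exact: iota_uniq.
        by move=> [a b] [c d] _ _ /= ->.
      + move=> p _; apply: allpairs_uniq; [exact: Tr_uniq|exact: Fo_uniq|].
        by move=> [a b] [c d] _ _ /= ->.
      + move=> x y /allpairsPdep[p [q [_ qin ->]]] /allpairsPdep[p' [q' [_ q'in ->]]] /=.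
        move=> [e1 e2].
        move: qin q'in => /allpairsP [[t r] [/= tin _ eq]] /allpairsP [[t' r'] [/= t'in _ eq']].
        subst q q'; simpl in e1, e2; subst t' r'.
        move: tin t'in; rewrite !mem_Tr /fptb => /and3P[/eqP e1 _ /eqP e2] /and3P[/eqP e1' _ /eqP e2'].
        have -> : p = p' by case: p p' e1 e2 e1' e2' => [? ?] [? ?] /= -> -> -> ->.
        by [].
  move=> f; rewrite mem_Fo mem_cat; apply/idP/orP.
  - case: f => [|t r].
      rewrite /ffb /fv /fo /= => /andP[/eqP n0 /eqP k0]; left; by rewrite /s1 -n0 -k0 /= mem_head.
    move=> /and3P [/= /andP[fpt fpr] /eqP fvn /eqP fok]; right.
    apply/allpairsPdep; exists (nverts t, outflow t), (t, r); split => //.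
      apply/allpairsP; exists (nverts t, outflow t); split => //;
        [change (nverts t \in iota 0 n.+1) | change (outflow t \in iota 0 k.+1)];
        rewrite mem_iota; move: fvn fok; rewrite /fv /fo /=; lia.
    apply/allpairsP; exists (t, r); split => //=.
      by rewrite mem_Tr /fptb !eqxx fpt.
    rewrite mem_Fo /ffb fpr; move: fvn fok; rewrite /fv /fo /= => fvn fok.
    by apply/andP; split; apply/eqP; lia.
  - case.
      by rewrite /s1; case: ifP => // /andP[/eqP -> /eqP ->]; rewrite inE => /eqP ->.
    move=> /allpairsPdep[p [q [pin qin ->]]].
    move: pin => /allpairsP [[i j] [iin jin pe]].
    move: qin => /allpairsP [[t r] [/= tin rin ->]]; subst p => /=.
    move: tin rin iin jin; rewrite mem_Tr mem_Fo mem_iota mem_iota /fptb /ffb /=.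
    move=> /and3P[/eqP nt fpt /eqP ot] /and3P[fpr /eqP fvr /eqP fok2] ilt jlt.
    rewrite fpt fpr /fv /fo /= -/(fv r) -/(fo r) fvr fok2 nt ot.
    by apply/andP; split; apply/eqP; lia.
rewrite (perm_big _ pL) big_cat /=.
congr (_ + _).
  by rewrite /s1; case: (_ && _); rewrite ?big_cons big_nil /fw /= ?addr0.
rewrite big_allpairs_dep /pairs big_allpairs.
have -> : iota 0 n.+1 = index_iota 0 n.+1 by rewrite /index_iota subn0.
have -> : iota 0 k.+1 = index_iota 0 k.+1 by rewrite /index_iota subn0.
rewrite big_mkord; apply: eq_bigr => i _.
rewrite big_mkord; apply: eq_bigr => j _.
rewrite /inner big_allpairs Fgen_seq big_distrl /=.
apply: eq_bigr => t _; rewrite big_distrr /=.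
by apply: eq_bigr.
Qed.

End Sums.
Arguments fw {R}.

Section Alg.
Variables (R : realType) (mu : nat -> R).

Lemma sum_one (X : nat -> nat -> R) n k :
  \sum_(i < n.+1) \sum_(j < k.+1) (ps_one i j : R) * X i j = X 0%N 0%N.
Proof.
rewrite big_ord_recl [X in _ + X]big1 ?addr0 => [|i _]; last first.
  by apply: big1 => j _; rewrite /ps_one lift0 /= mul0r.
rewrite big_ord_recl [X in _ + X]big1 ?addr0 => [|j _]; last first.
  by rewrite /ps_one lift0 /= mul0r.
by rewrite /ps_one /= mul1r.
Qed.

Lemma mulX (D : ps R) n k :
  ps_mul ps_X D n k = if n is m.+1 then D m k else 0.
Proof.
rewrite /ps_mul; case: n => [|m].
  by rewrite big_ord1; apply: big1 => j _; rewrite /ps_X /= mul0r.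
rewrite big_ord_recl [X in X + _]big1 ?add0r => [|j _]; last first.
  by rewrite /ps_X /= mul0r.
rewrite big_ord_recl [X in _ + X]big1 ?addr0 => [|i _]; last first.
  by apply: big1 => j _; rewrite /ps_X !lift0 /= mul0r.
rewrite big_ord_recl [X in _ + X]big1 ?addr0 => [|j _]; last first.
  by rewrite /ps_X !lift0 /= mul0r.
by rewrite /ps_X lift0 /= mul1r subn0 subSS subn0.
Qed.

Lemma inv_rec (P Q : ps R) : ps_mul (ps_sub ps_one P) Q = ps_one ->
  forall n k, Q n k = ps_one n k +
    \sum_(i < n.+1) \sum_(j < k.+1) P i j * Q (n - i)%N (k - j)%N.
Proof.
move=> H n k.
have := congr1 (fun F => F n k) H; rewrite /ps_mul /= => <-.
have -> : \sum_(i < n.+1) \sum_(j < k.+1) ps_sub ps_one P i j * Q (n - i)%N (k - j)%N =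
  \sum_(i < n.+1) \sum_(j < k.+1) ps_one i j * Q (n - i)%N (k - j)%N -
  \sum_(i < n.+1) \sum_(j < k.+1) P i j * Q (n - i)%N (k - j)%N.
  rewrite -sumrB; apply: eq_bigr => i _; rewrite -sumrB; apply: eq_bigr => j _.
  by rewrite /ps_sub mulrBl.
by rewrite (sum_one (fun i j => Q (n - i)%N (k - j)%N)) !subn0 subrK.
Qed.

Definition S n k := \sum_(f <- Fo n k) fw mu f.
Definition S0 n k : R := if k == 0%N then S n 0 else 0.

Lemma eqA : ps_mul (ps_sub ps_one (Fgen mu)) S = ps_one.
Proof.
apply/funext => n; apply/funext => k.
rewrite /ps_mul.
have -> : \sum_(i < n.+1) \sum_(j < k.+1) ps_sub ps_one (Fgen mu) i j * S (n - i)%N (k - j)%N =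
  \sum_(i < n.+1) \sum_(j < k.+1) ps_one i j * S (n - i)%N (k - j)%N -
  \sum_(i < n.+1) \sum_(j < k.+1) Fgen mu i j * S (n - i)%N (k - j)%N.
  rewrite -sumrB; apply: eq_bigr => i _; rewrite -sumrB; apply: eq_bigr => j _.
  by rewrite /ps_sub mulrBl.
rewrite (sum_one (fun i j => S (n - i)%N (k - j)%N)) !subn0 {1}/S Fo_decomp.
by rewrite addrK.
Qed.

Lemma eqB : ps_mul (ps_sub ps_one (ps_at_y0 (Fgen mu))) S0 = ps_one.
Proof.
apply/funext => n; apply/funext => k.
case: k => [|k].
  rewrite -[RHS](congr1 (fun F => F n 0%N) eqA) /ps_mul.
  apply: eq_bigr => i _; rewrite !big_ord1 /ps_sub /ps_at_y0 /S0 /=.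
  by rewrite subnn.
rewrite /ps_mul /ps_one andbF /=.
apply: big1 => i _; apply: big1 => j _.
case: (eqVneq (j : nat) 0%N) => [->|jn0].
  by rewrite /S0 subn0 /= mulr0.
by rewrite /ps_sub /ps_at_y0 /ps_one (negbTE jn0) andbF subrr mul0r.
Qed.

Definition Bs := ps_sub (ps_mul (ps_of_y mu) S) (ps_scale (mu 0%N) S0).

Lemma eqC n : Bs n 0%N = 0.
Proof.
rewrite /Bs /ps_sub /ps_mul /ps_scale /S0 /=.
rewrite big_ord_recl [X in _ + X - _]big1 ?addr0 => [|i _]; last first.
  by apply: big1 => j _; rewrite /ps_of_y lift0 /= mul0r.
by rewrite big_ord1 /ps_of_y /= subn0 subrr.
Qed.

Lemma eqD : Fgen mu = ps_mul ps_X (ps_divY Bs).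
Proof.
apply/funext => n; apply/funext => k.
rewrite mulX; case: n => [|m]; first exact: Fgen0.
rewrite /ps_divY /Bs /ps_sub /ps_scale /S0 /= mulr0 subr0 /ps_mul.
rewrite big_ord_recl [X in _ + X]big1 ?addr0 => [|i _]; last first.
  by apply: big1 => j _; rewrite /ps_of_y lift0 /= mul0r.
rewrite Fgen_seq Tr_decomp /ps_of_y /= subn0.
by apply: eq_bigr.
Qed.

Lemma existence : satisfies_eqn mu (Fgen mu).
Proof.
exists S, S0; split; first exact: eqA.
split; first exact: eqB.
by split; [exact: eqC | exact: eqD].
Qed.

End Alg.

Section Uniq.
Variables (R : realType) (mu : nat -> R).

Lemma sol_unique (P1 P2 : ps R) :
  satisfies_eqn mu P1 -> satisfies_eqn mu P2 -> P1 = P2.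
Proof.
move=> [Q1 [Q1' [HQ1 [HQ1' /= [_ HP1]]]]] [Q2 [Q2' [HQ2 [HQ2' /= [_ HP2]]]]].
have rec1 := inv_rec HQ1; have rec2 := inv_rec HQ2.
have rec1' := inv_rec HQ1'; have rec2' := inv_rec HQ2'.
have row1 k : P1 0%N k = 0 by rewrite HP1 mulX.
have row2 k : P2 0%N k = 0 by rewrite HP2 mulX.
suff H : forall n, (forall k, P1 n k = P2 n k) /\ (forall k, Q1 n k = Q2 n k) /\
    (forall k, Q1' n k = Q2' n k).
  by apply/funext => n; apply/funext => k; case: (H n).
elim/ltn_ind => n IH.
have HP : forall k, P1 n k = P2 n k.
  move=> k; case: n IH => [|m] IH; first by rewrite row1 row2.
  rewrite HP1 HP2 !mulX /ps_divY /ps_sub /ps_scale /ps_mul.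
  have [_ [_ ->]] := IH m (ltnSn m).
  congr (_ - _); apply: eq_bigr => i _; apply: eq_bigr => j _.
  have [_ [-> _]] := IH (m - i)%N (leq_ltn_trans (leq_subr _ _) (ltnSn m)).
  by [].
have HPle : forall i, (i <= n)%N -> forall j, P1 i j = P2 i j.
  move=> i; rewrite leq_eqVlt => /orP[/eqP -> //|/IH [] //].
have HQ : forall k, Q1 n k = Q2 n k.
  move=> k; rewrite rec1 rec2; congr (_ + _).
  apply: eq_bigr => i _; apply: eq_bigr => j _.
  case: (eqVneq (i : nat) 0%N) => [->|in0]; first by rewrite row1 row2 !mul0r.
  have lt : (n - i < n)%N by move: in0 (ltn_ord i); rewrite -lt0n; lia.
  rewrite HPle ?(leq_ord i) //.
  by have [_ [-> _]] := IH _ lt.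
have HQ' : forall k, Q1' n k = Q2' n k.
  move=> k; rewrite rec1' rec2'; congr (_ + _).
  apply: eq_bigr => i _; apply: eq_bigr => j _.
  case: (eqVneq (i : nat) 0%N) => [->|in0].
    by rewrite /ps_at_y0 !row1 !row2; case: ifP => _; rewrite !mul0r.
  have lt : (n - i < n)%N by move: in0 (ltn_ord i); rewrite -lt0n; lia.
  rewrite /ps_at_y0 !HPle ?(leq_ord i) //.
  by have [_ [_ ->]] := IH _ lt.
by [].
Qed.

End Uniq.

Unset Implicit Arguments.

Theorem mainTheorem5 (R : realType) (mu : nat -> R)
  (mu_ge0 : forall k, 0 <= mu k)
  (mu_sum1 : (fun N : nat => \sum_(k < N) mu k) @ \oo --> (1 : R)) :
  satisfies_eqn mu (Fgen mu) /\
  (forall P : ps R, satisfies_eqn mu P -> P = Fgen mu).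
Proof.
split; first exact: existence.
move=> P HP; exact: (sol_unique HP (existence R mu)).
Qed.
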